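(* In the even setting below, define recursively, for all $k\in\mathbb Z$ and $\ell\ge 0$, block columns $G^{(k)}_{2\ell}$, $\hat G^{(k)}_{2\ell+1}$ (of size $mn\times n$) and $n\times n$ matrices $\alpha_i^j(k)$ by $G^{(k)}_0=r_k$, $\hat G^{(k)}_{2\ell+1}=p_k\,(G^{(k+1)}_{2\ell})_{\mathrm{last}}+\Gamma G^{(k+1)}_{2\ell}$, $G^{(k)}_{2\ell+2}=\Gamma\hat G^{(k+1)}_{2\ell+1}$, $\alpha_0^{2\ell+1}(k)=(G^{(k+1)}_{2\ell})_{\mathrm{last}}$, $\alpha_{2r}^{2\ell+1}(k)=\alpha_{2r-1}^{2\ell}(k+1)$ for $1\le r\le \ell$, $\alpha_{2r+1}^{2\ell+2}(k)=\alpha_{2r}^{2\ell+1}(k+1)$ for $0\le r\le\ell$. Then for all $k$ and all $\ell\ge 0$, $$F^{(k)}_{2\ell}=\sum_{r=1}^{\ell}F^{(k)}_{2r-1}\alpha_{2r-1}^{2\ell}(k)+G^{(k)}_{2\ell},\qquad F^{(k)}_{2\ell+1}=\sum_{r=0}^{\ell}F^{(k)}_{2r}\alpha_{2r}^{2\ell+1}(k)+\hat G^{(k)}_{2\ell+1}.$$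
   Context: Even setting: integers $n\ge1$, $s\ge 2$, $m=2s$. For each $k\in\mathbb Z$ let $a_k^0,\dots,a_k^{m-1}$ be $n\times n$ matrices, $N$-periodic in $k$. $Q_k$ is the $mn\times mn$ block matrix with $I_n$ in the blocks $(i+1,i)$, $i=1,\dots,m-1$, last block column $(a_k^0;a_k^1;\dots;a_k^{m-1})$, and $O_n$ elsewhere. $r_k$ is the block column $(O_n;a_k^1;O_n;a_k^3;\dots;O_n;a_k^{2s-1})$ and $p_k=(a_k^0;O_n;a_k^2;O_n;\dots;a_k^{2s-2};O_n)$ (so the last block column of $Q_k$ is $p_k+r_k$). $\Gamma$ is the $mn\times mn$ block matrix with $I_n$ in blocks $(i+1,i)$ and $O_n$ elsewhere. $F^{(k)}_0=r_k$ and $F^{(k)}_\ell=Q_kQ_{k+1}\cdots Q_{k+\ell-1}r_{k+\ell}$ for $\ell\ge1$. For a block column $A$, $(A)_{\mathrm{last}}$ denotes its last $n\times n$ block. *)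

(* Defs.v *)
From HB Require Import structures.
From mathcomp Require Import all_boot all_order all_algebra.
Set Implicit Arguments. Unset Strict Implicit. Unset Printing Implicit Defensive.
Import Order.TTheory GRing.Theory Num.Theory.
Local Open Scope ring_scope.

Section EvenSetting.
Context {R : comRingType} (n m : nat).
(* a k j = a_k^j, for block index j : 'I_m *)
Variable a : int -> 'I_m -> 'M[R]_n.

(* mn x mn block matrices and mn x n block columns, with m blocks of size n *)
Definition bsz := (\sum_(i < m) n)%N.
Notation BM := 'M[R]_(bsz, bsz).
Notation BC := 'M[R]_(bsz, n).

Definition Qk (k : int) : BM :=
  \mxblock_(i < m, j < m)
    (if val i == (val j).+1 then (1%:M : 'M[R]_n)
     else if val j == m.-1 then a k i else 0).

Definition Gam : BM :=
  \mxblock_(i < m, j < m)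
    (if val i == (val j).+1 then (1%:M : 'M[R]_n) else 0).

(* r_k = (O; a^1; O; a^3; ...), p_k = (a^0; O; a^2; O; ...) (blocks 0-indexed) *)
Definition rk (k : int) : BC := \mxcol_(i < m) (if odd i then a k i else 0).
Definition pk (k : int) : BC := \mxcol_(i < m) (if odd i then 0 else a k i).

Definition lastb (A : BC) : 'M[R]_n :=
  \sum_(i < m | val i == m.-1) submxcol A i.

Fixpoint Qprod (k : int) (l : nat) : BM :=
  match l with
  | 0 => 1%:M
  | l'.+1 => Qk k *m Qprod (k + 1) l'
  end.

Definition Fk (k : int) (l : nat) : BC :=
  if l is 0 then rk k else Qprod k l *m rk (k + l%:Z).

(* Gs j k : for j = 2l this is G^{(k)}_{2l}, for j = 2l+1 it is \hat G^{(k)}_{2l+1} *)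
Fixpoint Gs (j : nat) (k : int) : BC :=
  match j with
  | 0 => rk k
  | j'.+1 =>
      if odd j' then Gam *m Gs j' (k + 1)
      else pk k *m lastb (Gs j' (k + 1)) + Gam *m Gs j' (k + 1)
  end.

Definition Gev (k : int) (l : nat) : BC := Gs (2 * l) k.
Definition Ghat (k : int) (l : nat) : BC := Gs (2 * l + 1) k.

(* alpha i j k = alpha_i^j(k):
   alpha_0^{j+1}(k) = (G^{(k+1)}_j)_last (used for j = 2l),
   alpha_{i+1}^{j+1}(k) = alpha_i^j(k+1). Only the paper's index range is used. *)
Fixpoint alpha (i j : nat) (k : int) {struct i} : 'M[R]_n :=
  match i, j with
  | 0, j'.+1 => lastb (Gs j' (k + 1))
  | i'.+1, j'.+1 => alpha i' j' (k + 1)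
  | _, 0 => 0
  end.

End EvenSetting.

(* Main.v *)
Require Import Defs.
From HB Require Import structures.
From mathcomp Require Import all_boot all_order all_algebra.
Import Order.TTheory GRing.Theory Num.Theory.
Local Open Scope ring_scope.

Section H.
Variables (R : comNzRingType) (n m : nat) (a : int -> 'I_m -> 'M[R]_n).
Hypothesis hm : odd m.-1.
Notation BC := 'M[R]_(bsz n m, n).

Lemma Gam_sub (x : BC) i :
  submxcol (@Gam R n m *m x) i = \sum_(j < m) (if val i == (val j).+1 then submxcol x j else 0).
Proof.
rewrite -[x]submxcolK /Gam mul_mxblock_mxrow mxcolK.
by apply: eq_bigr => j _; rewrite !mxcolK; case: ifP => _; rewrite ?mul1mx ?mul0mx.
Qed.

Lemma pk_sub k i : submxcol (pk a k) i = if odd i then 0 else a k i.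
Proof. exact: mxcolK. Qed.
Lemma rk_sub k i : submxcol (rk a k) i = if odd i then a k i else 0.
Proof. exact: mxcolK. Qed.

Lemma Qk_mul k (x : BC) :
  Qk a k *m x = @Gam R n m *m x + (pk a k + rk a k) *m lastb x.
Proof.
apply/mxcolP => i.
rewrite submxcolD Gam_sub -[submxcol (_ *m lastb x) _]submxcol_mul submxcolD pk_sub rk_sub.
rewrite [in LHS](_ : x = \mxcol_j submxcol x j); last by rewrite submxcolK.
rewrite /Qk mul_mxblock_mxrow mxcolK.
have -> : (if odd i then 0 else a k i) + (if odd i then a k i else 0) = a k i.
  by case: (odd i); rewrite ?addr0 ?add0r.
rewrite /lastb mulmx_sumr [X in _ = _ + X]big_mkcond -big_split /=.
apply: eq_bigr => j _.
case: eqP => [ij|_].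
  have -> : (val j == m.-1) = false.
    apply/negbTE; apply/eqP => jm; have := ltn_ord i; rewrite ij jm.
    by case: (m) => //= ? ; rewrite ltnn.
  by rewrite mul1mx addr0.
by case: (val j == m.-1); rewrite add0r ?mul0mx.
Qed.

Lemma Fk_S k l : Fk a k l.+1 = Qk a k *m Fk a (k + 1) l.
Proof.
rewrite /Fk /=; case: l => [|l].
  by rewrite mulmx1.
rewrite mulmxA; congr (_ *m rk a _).
rewrite -addrA; congr (_ + _).
Qed.

Definition zpat (b : bool) (x : BC) := forall i : 'I_m, odd i = b -> submxcol x i = 0.

Lemma zpat_Gam b x : zpat b x -> zpat (~~ b) (@Gam R n m *m x).
Proof.
move=> zx i oi; rewrite Gam_sub big1 // => j _.
case: eqP => // ij; apply: zx; move: oi; rewrite ij /=.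
by move/(congr1 negb); rewrite !negbK.
Qed.

Lemma zpat_pk k M : zpat true (pk a k *m M).
Proof. by move=> i oi; rewrite -submxcol_mul pk_sub oi mul0mx. Qed.

Lemma zpat_add b x y : zpat b x -> zpat b y -> zpat b (x + y).
Proof. by move=> zx zy i oi; rewrite submxcolD zx ?zy ?addr0. Qed.

Lemma zpat_rk k : zpat false (rk a k).
Proof. by move=> i oi; rewrite rk_sub oi. Qed.

Lemma lastb_z x : zpat true x -> lastb x = 0.
Proof. by move=> zx; rewrite /lastb big1 // => i /eqP im; apply: zx; rewrite im. Qed.

Lemma Gs_odd l k : Gs a (2 * l + 1) k =
  pk a k *m lastb (Gs a (2 * l) (k + 1)) + @Gam R n m *m Gs a (2 * l) (k + 1).
Proof. by rewrite addn1 /= oddM. Qed.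

Lemma Gs_even l k : Gs a (2 * l.+1) k = @Gam R n m *m Gs a (2 * l + 1) (k + 1).
Proof.
have -> : (2 * l.+1 = (2 * l + 1).+1)%N by rewrite mulnS addnC addn1 addn2.
by rewrite /= addn1 /= oddM.
Qed.

Lemma zpat_Gs l : forall k, zpat false (Gs a (2 * l) k) /\ zpat true (Gs a (2 * l + 1) k).
Proof.
elim: l => [|l IH] k.
  have z0 : forall k, zpat false (Gs a 0 k) by move=> k'; exact: zpat_rk.
  split; first exact: z0.
  rewrite (Gs_odd 0); apply: zpat_add; first exact: zpat_pk.
  by apply: (zpat_Gam false); exact: zpat_rk.
have ze : zpat false (Gs a (2 * l.+1) k).
  by rewrite Gs_even; apply: (zpat_Gam true); exact: (IH _).2.
split=> //; rewrite Gs_odd; apply: zpat_add; first exact: zpat_pk.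
have := zpat_Gam false (Gs a (2 * l.+1) (k + 1)).
by apply; rewrite Gs_even; apply: (zpat_Gam true); exact: (IH _).2.
Qed.

Lemma ac1 (V : zmodType) (x g p r : V) : x + (g + (p + r)) = r + x + (p + g).
Proof. rewrite [r + x]addrC [p + g]addrC -!addrA. congr (_ + _). by rewrite [RHS]addrC -addrA. Qed.

Definition E l k := Fk a k (2 * l) =
      \sum_(1 <= r < l.+1) Fk a k (2 * r - 1) *m alpha a (2 * r - 1) (2 * l) k
      + Gev a k l.
Definition O l k := Fk a k (2 * l + 1) =
      \sum_(0 <= r < l.+1) Fk a k (2 * r) *m alpha a (2 * r) (2 * l + 1) k
      + Ghat a k l.

Lemma even_step l : (forall k, E l k) -> forall k, O l k.
Proof.
move=> IH k; rewrite /O addn1 Fk_S (IH (k + 1)) mulmxDr mulmx_sumr Qk_mul.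
rewrite /Ghat Gs_odd /Gev big_add1 succnK big_nat_recl //.
have -> : \sum_(0 <= i < l) Qk a k *m (Fk a (k + 1) (2 * i.+1 - 1) *m
    alpha a (2 * i.+1 - 1) (2 * l) (k + 1)) =
  \sum_(0 <= i < l) Fk a k (2 * i.+1) *m alpha a (2 * i.+1) (2 * l).+1 k.
  apply: eq_bigr => r _.
  have e1 : (2 * r.+1 - 1 = (2 * r).+1)%N by rewrite mulnS addnC addn2 subn1.
  have e2 : (2 * r.+1 = (2 * r).+2)%N by rewrite mulnS addnC addn2.
  by rewrite e1 e2 [Fk a k _]Fk_S mulmxA.
rewrite mulmxDl.
change (Fk a k (2 * 0) *m alpha a (2 * 0) (2 * l).+1 k) with
  (rk a k *m lastb (Gs a (2 * l) (k + 1))).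
exact: ac1.
Qed.

Lemma odd_step l : (forall k, O l k) -> forall k, E l.+1 k.
Proof.
move=> IH k.
have e : (2 * l.+1 = (2 * l + 1).+1)%N by rewrite mulnS addnC addn1 addn2.
rewrite /E /Gev Gs_even e Fk_S (IH (k + 1)) mulmxDr mulmx_sumr Qk_mul /Ghat.
rewrite (lastb_z _ (zpat_Gs l (k + 1)).2) mulmx0 addr0 big_add1 succnK.
congr (_ + _); apply: eq_bigr => r _.
have e1 : (2 * r.+1 - 1 = (2 * r).+1)%N by rewrite mulnS addnC addn2 subn1.
by rewrite e1 [Fk a k _]Fk_S mulmxA.
Qed.

Lemma both l : forall k, E l k /\ O l k.
Proof.
elim: l => [|l IH] k.
  have E0 : forall k, E 0 k.
    by move=> k'; rewrite /E big_geq // add0r.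
  by split; [exact: E0 | exact: even_step].
have El : forall k, E l.+1 k by apply: odd_step => k'; exact: (IH k').2.
by split; [exact: El | exact: even_step].
Qed.
End H.

Theorem mainTheorem2 (R : comRingType) (n s : nat) (hn : (1 <= n)%N) (hs : (2 <= s)%N)
  (N : nat) (hN : (0 < N)%N) (a : int -> 'I_(2 * s) -> 'M[R]_n)
  (hper : forall (k : int) (i : 'I_(2 * s)), a (k + N%:Z) i = a k i) :
  forall (k : int) (l : nat),
    Fk a k (2 * l) =
      \sum_(1 <= r < l.+1) Fk a k (2 * r - 1) *m alpha a (2 * r - 1) (2 * l) k
      + Gev a k l
  /\ Fk a k (2 * l + 1) =
      \sum_(0 <= r < l.+1) Fk a k (2 * r) *m alpha a (2 * r) (2 * l + 1) k
      + Ghat a k l.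
Proof.
move=> k l.
have hm : odd (2 * s).-1.
  have -> : ((2 * s).-1 = (2 * s.-1).+1)%N.
    by case: (s) hs => // s' _; rewrite mulnS /= addnC addn1.
  by rewrite /= oddM.
exact: (@both R n (2 * s) a hm l k).
Qed.
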